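(* Let $\mathcal{P}=(V,\le)$ be a finite IIC poset and $G_{\mathcal{P}}$ its predecessors-successors bipartite graph. Then every biclique of $G_{\mathcal{P}}$ is equal to $X_v\cup Y_v$ for some $v\in V$.
   Context: All graphs are finite and simple. A biclique of a graph $G$ is a set $P\subseteq V(G)$ such that the induced subgraph $G[P]$ is a complete bipartite graph with both parts nonempty, and $P$ is inclusion-maximal with this property. For a poset $\mathcal{P}=(V,\le)$ and $x\in V$, $I^-_{\mathcal{P}}(x)=\{y\in V: y\le x\}$ and $I^+_{\mathcal{P}}(x)=\{y\in V: x\le y\}$. $\mathcal{P}$ is interval intersection closed (IIC) if for all $u,v\in V$: whenever $I^-_{\mathcal{P}}(u)\cap I^-_{\mathcal{P}}(v)\neq\emptyset$ there is $w\in V$ with $I^-_{\mathcal{P}}(w)=I^-_{\mathcal{P}}(u)\cap I^-_{\mathcal{P}}(v)$, and whenever $I^+_{\mathcal{P}}(u)\cap I^+_{\mathcal{P}}(v)\neq\emptyset$ there is $w\in V$ with $I^+_{\mathcal{P}}(w)=I^+_{\mathcal{P}}(u)\cap I^+_{\mathcal{P}}(v)$. The predecessors-successors bipartite graph $G_{\mathcal{P}}=(A\cup B,E)$ has $A=\{a_v: v\in V\}$, $B=\{b_v:v\in V\}$ (two disjoint copies of $V$) and $E=\{a_ub_v: u,v\in V,\ u\le v\}$. For $v\in V$, $X_v=\{a_u: u\in I^-_{\mathcal{P}}(v)\}$ and $Y_v=\{b_w: w\in I^+_{\mathcal{P}}(v)\}$. *)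

(* Defs.v *)
From mathcomp Require Import all_boot.
Set Implicit Arguments. Unset Strict Implicit. Unset Printing Implicit Defensive.

Definition complete_bipartite_induced (T : finType) (e : rel T) (P : {set T}) : Prop :=
  exists X Y : {set T},
    [/\ P = X :|: Y, [disjoint X & Y], X != set0, Y != set0 &
      [/\ forall x y, x \in X -> y \in Y -> e x y,
          forall x x', x \in X -> x' \in X -> ~~ e x x' &
          forall y y', y \in Y -> y' \in Y -> ~~ e y y']].

Definition biclique (T : finType) (e : rel T) (P : {set T}) : Prop :=
  complete_bipartite_induced e P /\
  (forall Q : {set T}, P \subset Q -> complete_bipartite_induced e Q -> Q = P).

Definition partial_order (V : finType) (le : rel V) : Prop :=
  [/\ reflexive le, antisymmetric le & transitive le].

Definition Iminus (V : finType) (le : rel V) (x : V) : {set V} := [set y | le y x].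
Definition Iplus (V : finType) (le : rel V) (x : V) : {set V} := [set y | le x y].

Definition IIC (V : finType) (le : rel V) : Prop :=
  forall u v : V,
    (Iminus le u :&: Iminus le v != set0 ->
       exists w, Iminus le w = Iminus le u :&: Iminus le v) /\
    (Iplus le u :&: Iplus le v != set0 ->
       exists w, Iplus le w = Iplus le u :&: Iplus le v).

(* Predecessors-successors bipartite graph on V + V:
   inl u = a_u, inr v = b_v, edge a_u b_v iff u <= v. *)
Definition ps_edge (V : finType) (le : rel V) : rel (V + V) :=
  fun p q => match p, q with
             | inl u, inr v => le u v
             | inr v, inl u => le u v
             | _, _ => false
             end.

Definition Xset (V : finType) (le : rel V) (v : V) : {set V + V} :=
  [set inl u | u in Iminus le v].
Definition Yset (V : finType) (le : rel V) (v : V) : {set V + V} :=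
  [set inr w | w in Iplus le v].

(* Main.v *)
Require Import Defs.
From mathcomp Require Import all_boot.

Lemma inl_in_inr (V : finType) (a : V) (W : {set V}) :
  (@inl V V a \in [set inr w | w in W]) = false.
Proof. by apply/negbTE/imsetP => -[b _]. Qed.

Lemma inr_in_inl (V : finType) (a : V) (W : {set V}) :
  (@inr V V a \in [set inl w | w in W]) = false.
Proof. by apply/negbTE/imsetP => -[b _]. Qed.

Lemma struct (V : finType) (le : rel V) (P : {set V + V}) :
  complete_bipartite_induced (ps_edge le) P ->
  [/\ exists u, inl u \in P, exists w, inr w \in P &
      forall u w, inl u \in P -> inr w \in P -> le u w].
Proof.
move=> [X [Y [-> dXY /set0Pn [x xX] /set0Pn [y yY] [cr nX nY]]]].
have exy := cr x y xX yY.
case: x xX exy => a xX; case: y yY => b yY //= exy.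
- have Xl : forall c, inr c \in X = false.
    move=> c; apply/negbTE/negP => cX; by have := cr _ _ cX yY.
  have Yr : forall c, inl c \in Y = false.
    move=> c; apply/negbTE/negP => cY; by have := cr _ _ xX cY.
  split; first by exists a; rewrite inE xX.
    by exists b; rewrite inE yY orbT.
  move=> u w; rewrite !inE Xl Yr orbF /= => uX wY.
  exact: (cr _ _ uX wY).
- have Xl : forall c, inl c \in X = false.
    move=> c; apply/negbTE/negP => cX; by have := cr _ _ cX yY.
  have Yr : forall c, inr c \in Y = false.
    move=> c; apply/negbTE/negP => cY; by have := cr _ _ xX cY.
  split; first by exists b; rewrite inE yY orbT.
    by exists a; rewrite inE xX.
  move=> u w; rewrite !inE Xl Yr orbF /= => uY wX.
  exact: (cr _ _ wX uY).
Qed.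

Lemma cb (V : finType) (le : rel V) (U W : {set V}) :
  U != set0 -> W != set0 -> (forall u w, u \in U -> w \in W -> le u w) ->
  complete_bipartite_induced (ps_edge le) ([set inl u | u in U] :|: [set inr w | w in W]).
Proof.
move=> /set0Pn [u uU] /set0Pn [w wW] cr.
exists [set inl u | u in U], [set inr w | w in W]; split => //.
- apply/pred0P => z /=; case: z => a; by rewrite ?inl_in_inr ?inr_in_inl ?andbF.
- by apply/set0Pn; exists (inl u); apply: imset_f.
- by apply/set0Pn; exists (inr w); apply: imset_f.
split.
- by move=> x y /imsetP [a aU ->] /imsetP [b bW ->] /=; apply: cr.
- by move=> x y /imsetP [a aU ->] /imsetP [b bW ->].
- by move=> x y /imsetP [a aU ->] /imsetP [b bW ->].
Qed.

Theorem lemma8 (V : finType) (le : rel V) :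
  partial_order le -> IIC le ->
  forall P : {set V + V}, biclique (ps_edge le) P ->
  exists v : V, P = Xset le v :|: Yset le v.
Proof.
move=> [refl antis tr] iic P [cbP maxP].
have [[u0 Hu0] [w0 Hw0] cross] := @struct _ _ _ cbP.
set U := [set u | inl u \in P]; set W := [set w | inr w \in P].
have PE : P = [set inl u | u in U] :|: [set inr w | w in W].
  apply/setP => -[a|a]; rewrite !inE ?inl_in_inr ?inr_in_inl ?orbF //=
     ?mem_imset //; try exact: inr_inj; try exact: inl_inj; by rewrite inE.
have maxUW : forall U' W' : {set V}, U \subset U' -> W \subset W' -> U' != set0 -> W' != set0 ->
    (forall u w, u \in U' -> w \in W' -> le u w) ->
    P = [set inl u | u in U'] :|: [set inr w | w in W'].
  move=> U' W' sU sW nU nW cr; symmetry; apply: maxP; last exact: cb.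
  by rewrite PE; apply: setUSS; apply: imsetS.
have u0U : u0 \in U by rewrite inE.
have w0W : w0 \in W by rewrite inE.
have crUW : forall u w, u \in U -> w \in W -> le u w.
  by move=> u w; rewrite !inE; apply: cross.
case: (arg_maxnP (fun m => #|Iminus le m|) u0U) => m mU mmax.
have leum : forall u, u \in U -> le u m.
  move=> u uU.
  have ne : Iplus le u :&: Iplus le m != set0.
    by apply/set0Pn; exists w0; rewrite !inE !crUW.
  have [z Hz] := (iic u m).2 ne.
  have zz : z \in Iplus le z by rewrite inE refl.
  move: (zz); rewrite Hz !inE => /andP [uz mz].
  have zW : forall w, w \in W -> le z w.
    move=> w wW; have : w \in Iplus le u :&: Iplus le m by rewrite !inE !crUW.
    by rewrite -Hz inE.
  have E := maxUW (z |: U) W (subsetUr _ _) (subxx _).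
  have zU : z \in U.
    have : inl z \in P.
      rewrite E; first by rewrite inE mem_imset ?setU11 //; exact: inl_inj.
      - by apply/set0Pn; exists z; rewrite setU11.
      - by apply/set0Pn; exists w0.
      move=> a w /setU1P [-> | aU] wW; [exact: zW | exact: crUW].
    by rewrite inE.
  have sub : Iminus le m \subset Iminus le z.
    by apply/subsetP => a; rewrite !inE => am; apply: tr am mz.
  have H : #|Iminus le z| <= #|Iminus le m| := mmax z zU; have Heq : Iminus le m = Iminus le z by apply/eqP; rewrite eqEcard sub H.
  have : z \in Iminus le z by rewrite inE refl.
  rewrite -Heq inE => zm.
  by have <- : z = m by apply: antis; rewrite zm.
exists m.
rewrite (maxUW (Iminus le m) (Iplus le m)) //.
- by apply/subsetP => u uU; rewrite inE leum.
- by apply/subsetP => w wW; rewrite inE crUW.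
- by apply/set0Pn; exists m; rewrite inE refl.
- by apply/set0Pn; exists m; rewrite inE refl.
- by move=> u w; rewrite !inE => um mw; apply: tr um mw.
Qed.
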